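(* Let $n,t\ge1$, $q\ge2$, $b\ge1$. Then \[ N_{q,b}^+(n,t)=q^{t(b-1)}\sum_{i=0}^{t-1}\binom{n+t}{i}(q-1)^i\big[1-(-1)^{t-i}\big]. \]
   Context: $\Sigma_q=\{0,\ldots,q-1\}$. A $b$-burst-insertion at position $i\in[1,n+1]$ transforms $x_1\cdots x_n$ into $x_1\cdots x_{i-1}y_1\cdots y_b x_i\cdots x_n$ for arbitrary $y_1\cdots y_b\in\Sigma_q^b$. $\mathcal{I}_{t,b}(\boldsymbol{x})$ is the set of all length-$(n+tb)$ sequences obtainable from $\boldsymbol{x}$ by $t$ successive $b$-burst-insertions. $N_{q,b}^+(n,t)=\max\{|\mathcal{I}_{t,b}(\boldsymbol{x})\cap\mathcal{I}_{t,b}(\boldsymbol{y})|:\boldsymbol{x}\ne\boldsymbol{y}\in\Sigma_q^n\}$. Convention: $\binom{m}{i}=0$ if $m<i$. *)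

(* Defs.v *)
From mathcomp Require Import all_boot all_order all_algebra.
Set Implicit Arguments. Unset Strict Implicit. Unset Printing Implicit Defensive.

(* Alphabet Sigma_q = 'I_q = {0,...,q-1}; words are seq 'I_q. *)

(* All results of one b-burst-insertion into x: for a position i in
   {0,...,size x} (paper's position i+1 in [1, n+1]) and any word w of
   length b, the word x_1..x_i w x_{i+1}..x_n. *)
Definition burst_ins (q b : nat) (x : seq 'I_q) : seq (seq 'I_q) :=
  flatten [seq [seq take i x ++ val w ++ drop i x | w : b.-tuple 'I_q]
          | i <- iota 0 (size x).+1].

Fixpoint ins_iter (q b t : nat) (x : seq 'I_q) : seq (seq 'I_q) :=
  match t with
  | 0 => [:: x]
  | t'.+1 => flatten [seq burst_ins b z | z <- ins_iter b t' x]
  end.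

Definition Ibt (q b t n : nat) (x : n.-tuple 'I_q) : {set (n + t * b).-tuple 'I_q} :=
  [set y : (n + t * b).-tuple 'I_q | val y \in ins_iter b t (val x)].

Definition Nplus (q b n t : nat) : nat :=
  \max_(x : n.-tuple 'I_q) \max_(y : n.-tuple 'I_q | y != x)
     #|Ibt b t x :&: Ibt b t y|.

(* Main.v *)
Require Import Defs.
From mathcomp Require Import all_boot all_order all_algebra.
From mathcomp Require Import zify ring.
Import GRing.Theory Num.Theory.
Set Implicit Arguments. Unset Strict Implicit. Unset Printing Implicit Defensive.

Fixpoint G (q b t : nat) (x z : seq 'I_q) {struct t} : bool :=
  let fix Gx (x z : seq 'I_q) {struct x} : bool :=
    match x with
    | [::] => size z == t * b
    | a :: x' => (match z with c :: z' => (c == a) && Gx x' z' | [::] => false end)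
                 || (match t with 0 => false | t'.+1 => (b <= size z) && G b t' (a :: x') (drop b z) end)
    end
  in Gx x z.

Lemma G_nil q b t (z : seq 'I_q) : G b t [::] z = (size z == t * b).
Proof. by case: t. Qed.

Lemma G_cons q b t a (x z : seq 'I_q) : G b t (a :: x) z =
  (if z is c :: z' then (c == a) && G b t x z' else false) ||
  (if t is t'.+1 then (b <= size z) && G b t' (a :: x) (drop b z) else false).
Proof. by case: t. Qed.

Lemma G_size q b t (x z : seq 'I_q) : G b t x z -> size z = size x + t * b.
Proof.
elim: t x z => [|t IHt] x; elim: x => [|a x IHx] z.
- by rewrite G_nil => /eqP.
- rewrite G_cons orbF; case: z => // c z /andP[_ /IHx] /= ->; by rewrite addSn.
- by rewrite G_nil => /eqP.
- rewrite G_cons; case/orP.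
  + case: z => // c z /andP[_ /IHx] /= ->; by rewrite addSn.
  + case/andP=> hb /IHt; rewrite size_drop => h.
    have := subnK hb; rewrite h => <-; rewrite mulSn /=; lia.
Qed.

Lemma G0 q b (x z : seq 'I_q) : G b 0 x z = (z == x).
Proof.
elim: x z => [|a x IH] z; first by rewrite G_nil mul0n size_eq0.
rewrite G_cons orbF; case: z => // c z; by rewrite IH eqseq_cons.
Qed.

Lemma G_pre q b t (x z v : seq 'I_q) : 0 < b -> size v = b -> G b t x z -> G b t.+1 x (v ++ z).
Proof.
move=> b0 hv; case: x => [|a x].
  by rewrite !G_nil size_cat hv => /eqP ->; rewrite mulSn.
move=> h; rewrite G_cons; apply/orP; right.
by rewrite size_cat hv leq_addr /= drop_size_cat.
Qed.

Lemma G_ins q b t (x u v w : seq 'I_q) : 0 < b -> size w = b ->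
  G b t x (u ++ v) -> G b t.+1 x (u ++ w ++ v).
Proof.
move=> b0 hw; elim: t x u v => [|t IHt] x; elim: x => [|a x IHx] u v.
- by rewrite !G_nil !size_cat hw => /eqP h; apply/eqP; rewrite mulSn mul0n; lia.
- rewrite G_cons orbF.
  case: u => [|c u]; rewrite ?cat0s ?cat_cons.
    case: v => // c v /andP[/eqP -> hG]. apply: G_pre => //; rewrite G_cons eqxx hG //.
  move=> /andP[/eqP -> hG]; rewrite G_cons eqxx /=; apply/orP; left; exact: IHx.
- by rewrite !G_nil !size_cat hw => /eqP h; apply/eqP; rewrite mulSn; lia.
- rewrite G_cons => /orP[].
  + case: u => [|c u]; rewrite ?cat0s ?cat_cons.
      case: v => // c v /andP[/eqP -> hG]; apply: G_pre => //; rewrite G_cons eqxx hG //.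
    move=> /andP[/eqP -> hG]; rewrite G_cons eqxx /=; apply/orP; left; exact: IHx.
  + case/andP=> hb hG; rewrite G_cons; apply/orP; right.
    rewrite !size_cat hw; apply/andP; split; first by rewrite addnCA leq_addr.
    move: hG; rewrite !drop_cat.
    case: (ltnP b (size u)) => hu.
      exact: IHt.
    move=> hG.
    have hv : b - size u <= size v by rewrite size_cat in hb; lia.
    have e : drop (b - size u) (w ++ v) = drop (b - size u) w ++ v.
      rewrite drop_cat hw; case: ltnP => // h.
      have -> : b - size u - b = 0 by lia.
      by rewrite drop0 drop_oversize // hw.
    rewrite -drop_cat e -(cat_take_drop (b - size u) v) catA.
    apply: G_pre => //.
    rewrite size_cat size_drop size_take hw; case: ifP => h; lia.
Qed.

Lemma G_split q b t (x z : seq 'I_q) : G b t.+1 x z ->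
  exists u v w, [/\ size w = b, z = u ++ w ++ v & G b t x (u ++ v)].
Proof.
elim: x z => [|a x IHx] z.
  rewrite !G_nil => /eqP hz; exists [::], (drop b z), (take b z).
  split; [rewrite size_take hz; case: ifP => h; lia | by rewrite cat_take_drop |].
  rewrite G_nil size_drop hz; apply/eqP; rewrite mulSn; lia.
rewrite G_cons => /orP[].
  case: z => // c z /andP[/eqP -> /IHx [u [v [w [hw -> hG]]]]].
  exists (a :: u), v, w; split => //; rewrite cat_cons G_cons eqxx hG //.
case/andP=> hb hG; exists [::], (drop b z), (take b z).
by rewrite cat0s cat_take_drop size_take; split => //; case: ifP => h; lia.
Qed.

Lemma mem_burst q b (y z : seq 'I_q) : (z \in burst_ins b y) <->
  exists u v w, [/\ size w = b, y = u ++ v & z = u ++ w ++ v].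
Proof.
split.
  case/flattenP=> s /mapP [i hi ->] /mapP [w hw ->].
  exists (take i y), (drop i y), (val w); split => //; first by rewrite size_tuple.
  by rewrite cat_take_drop.
case=> u [v [w [hw hy hz]]].
apply/flattenP; exists [seq take (size u) y ++ val w0 ++ drop (size u) y | w0 : b.-tuple 'I_q].
  apply/mapP; exists (size u) => //; rewrite mem_iota add0n ltnS hy size_cat leq_addr //.
have hwt : size w == b by rewrite hw.
apply/mapP; exists (Tuple hwt); first by rewrite mem_enum.
by rewrite hz hy /= take_size_cat // drop_size_cat.
Qed.

Lemma mem_ins_iter q b t (x z : seq 'I_q) : 0 < b -> (z \in ins_iter b t x) = G b t x z.
Proof.
move=> b0; elim: t z => [|t IHt] z; first by rewrite [ins_iter _ _ _]/= inE G0.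
apply/idP/idP.
  case/flattenP=> s /mapP [y hy ->] /mem_burst [u [v [w [hw hyu hz]]]].
  rewrite hz; apply: G_ins => //; by rewrite -hyu -IHt.
case/G_split => u [v [w [hw hz hG]]].
apply/flattenP; exists (burst_ins b (u ++ v)).
  by apply/mapP; exists (u ++ v) => //; rewrite IHt.
by apply/mem_burst; exists u, v, w.
Qed.

Lemma G_absorb q b t a (x u v : seq 'I_q) : 0 < b -> size v = b.-1 ->
  G b t (a :: x) u -> G b t.+1 x (v ++ u).
Proof.
move=> b0; elim: t u v => [|t IHt] u v hv; rewrite G_cons.
  rewrite orbF; case: u => // c u /andP[/eqP -> hG].
  rewrite -cat_rcons; apply: G_pre => //; by rewrite size_rcons hv prednK.
case/orP.
  case: u => // c u /andP[/eqP -> hG].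
  rewrite -cat_rcons; apply: G_pre => //; by rewrite size_rcons hv prednK.
case/andP => hb hG.
have e : v ++ u = (v ++ take 1 u) ++ (drop 1 (take b u) ++ drop b u).
  rewrite -catA; congr (_ ++ _); rewrite catA.
  have -> : take 1 u = take 1 (take b u) by rewrite take_takel.
  by rewrite cat_take_drop cat_take_drop.
rewrite e; apply: G_pre => //.
  rewrite size_cat size_take hv; case: ifP => h; lia.
apply: IHt hG.
rewrite size_drop size_take; case: ifP => h; lia.
Qed.

Lemma G_same q b t a (x s : seq 'I_q) : 0 < b -> G b t (a :: x) (a :: s) = G b t x s.
Proof.
move=> b0; rewrite G_cons eqxx /=; apply/idP/idP; last by move=> ->.
case/orP => //; case: t => // t /andP[hb hG].
have e : s = take b.-1 s ++ drop b.-1 s by rewrite cat_take_drop.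
rewrite e; apply: (G_absorb (a := a)) => //.
  rewrite size_take; case: ifP => h //; move: hb => /=; lia.
by case: b b0 hb hG {e} => // b _ _.
Qed.

Definition cnt q m (P : pred (seq 'I_q)) : nat := \sum_(y : m.-tuple 'I_q) P (val y).

Lemma cnt_le q m (P Q : pred (seq 'I_q)) :
  (forall s, size s = m -> P s -> Q s) -> cnt m P <= cnt m Q.
Proof.
move=> h; apply: leq_sum => y _; case hP: (P (val y)) => //.
by rewrite (h _ (size_tuple y) hP).
Qed.

Lemma cnt_ext q m (P Q : pred (seq 'I_q)) :
  (forall s, size s = m -> P s = Q s) -> cnt m P = cnt m Q.
Proof. by move=> h; apply: eq_bigr => y _; rewrite h // size_tuple. Qed.

Lemma cnt_cons q m (P : pred (seq 'I_q)) :
  cnt m.+1 P = \sum_(c : 'I_q) cnt m (fun s => P (c :: s)).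
Proof.
rewrite /cnt pair_big /=.
rewrite (reindex (fun p : 'I_q * m.-tuple 'I_q => [tuple of p.1 :: p.2])) //=.
exists (fun y : m.+1.-tuple 'I_q => (thead y, [tuple of behead y])) => [[c y] _|y _] /=.
  by rewrite theadE; congr (_, _); apply: val_inj.
by rewrite [RHS]tuple_eta.
Qed.

Lemma cnt_drop q k m (P : pred (seq 'I_q)) :
  cnt (k + m) (fun s => P (drop k s)) = q ^ k * cnt m P.
Proof.
elim: k P => [|k IH] P; first by rewrite mul1n; apply: cnt_ext => s _; rewrite drop0.
rewrite addSn cnt_cons.
rewrite (eq_bigr (fun _ => q ^ k * cnt m P)); last first.
  move=> c _; rewrite -IH; apply: cnt_ext => s _ //.
by rewrite sum_nat_const card_ord expnS mulnA.
Qed.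

Lemma cnt_true q m : cnt m (fun _ : seq 'I_q => true) = q ^ m.
Proof. by rewrite /cnt sum_nat_const card_tuple card_ord muln1. Qed.

Lemma sum_const_pred q (P : pred 'I_q) K : \sum_(c | P c) K = (\sum_(c | P c) 1) * K.
Proof. by rewrite big_distrl /=; apply: eq_bigr => c _; rewrite mul1n. Qed.

Lemma sum_split1 q (a : 'I_q) (F : 'I_q -> nat) :
  \sum_c F c = F a + \sum_(c | c != a) F c.
Proof. by rewrite (bigD1 a). Qed.

Lemma sum_split2 q (a e : 'I_q) (F : 'I_q -> nat) : a != e ->
  \sum_c F c = F a + F e + \sum_(c | (c != a) && (c != e)) F c.
Proof.
move=> ae; rewrite (bigD1 a) // (bigD1 e) /=; last by rewrite eq_sym.
rewrite addnA; congr (_ + _ + _); apply: eq_bigl => c; by rewrite andbC.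
Qed.

Lemma card_neq1 q (a : 'I_q) : \sum_(c | c != a) 1 = q - 1.
Proof.
have := sum_split1 a (fun _ => 1); rewrite sum_nat_const card_ord muln1 => h.
lia.
Qed.

Lemma card_neq2 q (a e : 'I_q) : a != e -> \sum_(c | (c != a) && (c != e)) 1 = q - 2.
Proof.
move=> ae; have := sum_split2 (fun _ => 1) ae; rewrite sum_nat_const card_ord muln1 => h.
lia.
Qed.

Lemma G_other q b t (a c : 'I_q) (x s : seq 'I_q) : 0 < b -> c != a ->
  G b t (a :: x) (c :: s) =
  (if t is t'.+1 then (b <= (size s).+1) && G b t' (a :: x) (drop b.-1 s) else false).
Proof.
move=> b0 ca; rewrite G_cons (negbTE ca) /=.
by case: t => // t; case: b b0 => // b.
Qed.

Fixpoint sz (q b t : nat) {struct t} : nat -> nat :=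
  fix f n := match n with
  | 0 => q ^ (t * b)
  | n'.+1 => match t with 0 => 1 | t'.+1 => f n' + (q - 1) * q ^ b.-1 * sz q b t' n'.+1 end
  end.

Lemma sz0n q b n : sz q b 0 n = 1.
Proof. by case: n. Qed.

Lemma szSS q b t n : sz q b t.+1 n.+1 = sz q b t.+1 n + (q - 1) * q ^ b.-1 * sz q b t n.+1.
Proof. by []. Qed.

Lemma ball_size q b t (x : seq 'I_q) : 0 < b ->
  cnt (size x + t * b) (G b t x) = sz q b t (size x).
Proof.
move=> b0; elim: t x => [|t IHt] x; elim: x => [|a x IHx].
- by rewrite (cnt_ext (Q := fun _ => true)) ?cnt_true // => s hs; rewrite G_nil hs eqxx.
- rewrite sz0n addSn cnt_cons (sum_split1 a) (cnt_ext (Q := G b 0 x)); last by move=> s _; rewrite G_same.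
  rewrite IHx sz0n big1 // => c ca; rewrite /cnt big1 // => y _; by rewrite G_other.
- by rewrite (cnt_ext (Q := fun _ => true)) ?cnt_true // => s hs; rewrite G_nil hs eqxx.
- rewrite [size (a :: x)]/= addSn cnt_cons (sum_split1 a) (cnt_ext (Q := G b t.+1 x)); last by move=> s _; rewrite G_same.
  rewrite IHx szSS; congr (_ + _).
  rewrite (eq_bigr (fun _ => q ^ b.-1 * sz q b t (size x).+1)).
    by rewrite sum_const_pred card_neq1 mulnA.
  move=> c ca.
  rewrite (cnt_ext (Q := fun s => G b t (a :: x) (drop b.-1 s))); last first.
    move=> s hs; rewrite G_other // hs.
    have -> : b <= (size x + t.+1 * b).+1 by rewrite mulSn; lia.
    by [].
  have -> : size x + t.+1 * b = b.-1 + (size (a :: x) + t * b) by rewrite /= mulSn; lia.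
  by rewrite cnt_drop IHt.
Qed.

Fixpoint M (q b t n : nat) : nat :=
  match t with 0 => 0 | t'.+1 => 2 * q ^ b.-1 * sz q b t' n + (q - 2) * q ^ b.-1 * M q b t' n end.

Lemma M_rec q b t n : M q b t.+1 n.+1 = M q b t.+1 n + (q - 1) * q ^ b.-1 * M q b t n.+1.
Proof.
elim: t n => [|t IH] n; first by rewrite /= !muln0 !addn0; case: n.
have MS : forall t n, M q b t.+1 n = 2 * q ^ b.-1 * sz q b t n + (q - 2) * q ^ b.-1 * M q b t n by [].
rewrite (MS t.+1 n.+1) (MS t.+1 n) szSS [in LHS]IH [in RHS](MS t n.+1).
ring.
Qed.

Lemma cnt_false q m : cnt m (fun _ : seq 'I_q => false) = 0.
Proof. by rewrite /cnt big1. Qed.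

Lemma cnt_dropG q b t e (y : seq 'I_q) n' : 0 < b -> size y = n' ->
  cnt (n' + t.+1 * b) (fun s => G b t (e :: y) (drop b.-1 s)) = q ^ b.-1 * sz q b t n'.+1.
Proof.
move=> b0 hy.
have -> : n' + t.+1 * b = b.-1 + (size (e :: y) + t * b) by rewrite /= hy mulSn; lia.
by rewrite cnt_drop ball_size // /= hy.
Qed.

Lemma cnt_rest q b t (a e c : 'I_q) (x y : seq 'I_q) n' : 0 < b -> size x = n' ->
  c != a -> c != e ->
  cnt (n' + t.+1 * b) (fun s => G b t.+1 (a :: x) (c :: s) && G b t.+1 (e :: y) (c :: s)) =
  q ^ b.-1 * cnt (size (a :: x) + t * b) (fun s => G b t (a :: x) s && G b t (e :: y) s).
Proof.
move=> b0 hx ca ce.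
rewrite -(cnt_drop b.-1 _ (fun s => G b t (a :: x) s && G b t (e :: y) s)).
have -> : b.-1 + (size (a :: x) + t * b) = n' + t.+1 * b by rewrite /= hx mulSn; lia.
apply: cnt_ext => s hs; rewrite !G_other // hs.
have -> : b <= (n' + t.+1 * b).+1 by rewrite mulSn; lia.
by [].
Qed.

Lemma inter_upper q b t (x y : seq 'I_q) : 0 < b -> size x = size y -> x != y ->
  cnt (size x + t * b) (fun s => G b t x s && G b t y s) <= M q b t (size x).
Proof.
move=> b0; elim: t x y => [|t IHt] x y.
  move=> _ xy; rewrite (cnt_ext (Q := fun _ => false)) ?cnt_false // => s _.
  rewrite !G0; apply/negP => /andP[/eqP -> /eqP sy]; by rewrite sy eqxx in xy.
elim: x y => [|a x IHx] [|e y] // [hxy] nxy.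
rewrite [size (a :: x)]/= addSn cnt_cons.
case: (eqVneq a e) => [ae|ae].
  subst e; rewrite (sum_split1 a) M_rec; apply: leq_add.
    rewrite (cnt_ext (Q := fun s => G b t.+1 x s && G b t.+1 y s)); last by move=> s _; rewrite !G_same.
    apply: IHx => //; move: nxy; by rewrite eqseq_cons eqxx.
  rewrite (eq_bigr (fun _ => q ^ b.-1 *
     cnt (size (a :: x) + t * b) (fun s => G b t (a :: x) s && G b t (a :: y) s))); last first.
    by move=> c ca; apply: cnt_rest.
  rewrite sum_const_pred card_neq1 -!mulnA; apply: leq_mul => //; apply: leq_mul => //.
  apply: IHt => //; by rewrite /= hxy.
rewrite (sum_split2 _ ae).
rewrite (_ : M q b t.+1 (size x).+1 = q ^ b.-1 * sz q b t (size x).+1 + q ^ b.-1 * sz q b t (size x).+1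
   + (q - 2) * q ^ b.-1 * M q b t (size x).+1); last by rewrite /M -/M; ring.
apply: leq_add; first apply: leq_add.
- apply: leq_trans (cnt_le (Q := fun s => G b t (e :: y) (drop b.-1 s)) _) _.
    by move=> s hs /andP[_]; rewrite G_other // => /andP[_ ->].
  by rewrite cnt_dropG.
- apply: leq_trans (cnt_le (Q := fun s => G b t (a :: x) (drop b.-1 s)) _) _.
    by move=> s hs /andP[]; rewrite G_other 1?eq_sym // => /andP[_ ->].
  by rewrite cnt_dropG.
- rewrite (eq_bigr (fun _ => q ^ b.-1 *
     cnt (size (a :: x) + t * b) (fun s => G b t (a :: x) s && G b t (e :: y) s))); last first.
    by move=> c /andP[ca ce]; apply: cnt_rest.
  rewrite sum_const_pred card_neq2 // -!mulnA; apply: leq_mul => //; apply: leq_mul => //.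
  apply: IHt => //; by rewrite /= hxy.
Qed.

Lemma absorb_eq q b t (a e : 'I_q) (u s : seq 'I_q) : 0 < b -> a != e ->
  size s = size u + t.+1 * b ->
  G b t.+1 (a :: u) (a :: s) && G b t.+1 (e :: u) (a :: s) = G b t (e :: u) (drop b.-1 s).
Proof.
move=> b0 ae hs; have ea : e != a by rewrite eq_sym.
rewrite G_same // G_other // hs.
have -> : b <= (size u + t.+1 * b).+1 by rewrite mulSn; lia.
rewrite /=; apply/idP/idP; first by case/andP.
move=> h; rewrite h andbT.
rewrite -(cat_take_drop b.-1 s); apply: G_absorb h => //.
rewrite size_take hs; case: ifP => // h'; rewrite mulSn in h'; lia.
Qed.

Lemma inter_lower q b t (a e : 'I_q) (u : seq 'I_q) : 0 < b -> a != e ->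
  cnt (size (a :: u) + t * b) (fun s => G b t (a :: u) s && G b t (e :: u) s) = M q b t (size u).+1.
Proof.
move=> b0 ae; elim: t => [|t IHt].
  rewrite (cnt_ext (Q := fun _ => false)) ?cnt_false // => s _.
  rewrite !G0; apply/negP => /andP[/eqP -> /eqP]; case=> h; by rewrite h eqxx in ae.
rewrite [size (a :: u)]/= addSn cnt_cons (sum_split2 _ ae).
rewrite (_ : M q b t.+1 (size u).+1 = q ^ b.-1 * sz q b t (size u).+1 + q ^ b.-1 * sz q b t (size u).+1
   + (q - 2) * q ^ b.-1 * M q b t (size u).+1); last by rewrite /M -/M; ring.
congr (_ + _ + _).
- rewrite (cnt_ext (Q := fun s => G b t (e :: u) (drop b.-1 s))); first by rewrite cnt_dropG.
  by move=> s hs; rewrite absorb_eq.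
- rewrite (cnt_ext (Q := fun s => G b t (a :: u) (drop b.-1 s))); first by rewrite cnt_dropG.
  by move=> s hs; rewrite andbC absorb_eq // eq_sym.
- rewrite (eq_bigr (fun _ => q ^ b.-1 *
     cnt (size (a :: u) + t * b) (fun s => G b t (a :: u) s && G b t (e :: u) s))); last first.
    by move=> c /andP[ca ce]; apply: cnt_rest.
  by rewrite sum_const_pred card_neq2 // IHt mulnA.
Qed.

Lemma card_Ibt q b t n (x y : n.-tuple 'I_q) : 0 < b ->
  #|Ibt b t x :&: Ibt b t y| = cnt (n + t * b) (fun s => G b t x s && G b t y s).
Proof.
move=> b0; rewrite -sum1_card /cnt big_mkcond; apply: eq_bigr => z _.
by rewrite !inE !mem_ins_iter //; case: (_ && _).
Qed.

Lemma Nplus_M q b n t : 0 < n -> 1 < q -> 0 < b -> Nplus q b n t = M q b t n.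
Proof.
move=> n0 q1 b0; apply/eqP; rewrite eqn_leq; apply/andP; split.
  apply/bigmax_leqP => x _; apply/bigmax_leqP => y yx.
  rewrite card_Ibt //.
  have := @inter_upper q b t x y b0; rewrite !size_tuple; apply => //.
  by rewrite eq_sym.
pose a : 'I_q := Ordinal (ltnW q1).
pose e : 'I_q := Ordinal q1.
have hs : size (a :: nseq n.-1 a) == n by rewrite /= size_nseq prednK.
have he : size (e :: nseq n.-1 a) == n by rewrite /= size_nseq prednK.
pose x := Tuple hs; pose y := Tuple he.
have ae : a != e by [].
apply: leq_trans (leq_bigmax x) ; apply: leq_trans (leq_bigmax_cond (P := fun y => y != x) (F := fun y => #|Ibt b t x :&: Ibt b t y|) y _).
  rewrite card_Ibt //.
  have := inter_lower t (nseq n.-1 a) b0 ae.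
  by rewrite /= size_nseq prednK // => ->.
apply/eqP => /(congr1 (fun z : n.-tuple _ => head a (val z))) /= h. by rewrite h eqxx in ae.
Qed.

Local Open Scope ring_scope.
Lemma PoszX (n k : nat) : (n ^ k)%:Z = n%:Z ^+ k.
Proof. by elim: k => [|k IH] //; rewrite expnS exprS PoszM IH. Qed.

Definition fz (q n t : nat) : int :=
  \sum_(i < t) ('C(n + t, i) * (q - 1) ^ i)%:Z * (1 - (-1) ^+ (t - i)).

Lemma fz0 q n : fz q n 0 = 0.
Proof. by rewrite /fz big_ord0. Qed.

Lemma fz_pascal q n t : fz q n.+1 t.+1 = fz q n t.+1 + (q - 1)%:Z * fz q n.+1 t.
Proof.
rewrite /fz big_ord_recl [in X in _ = X + _]big_ord_recl -addrA; congr (_ + _).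
  by rewrite !bin0.
rewrite mulr_sumr -big_split /=; apply: eq_bigr => i _.
rewrite /bump /= !add1n subSS.
have -> : (n.+1 + t.+1 = (n + t.+1).+1)%N by rewrite addSn.
have -> : (n.+1 + t = n + t.+1)%N by rewrite addnS addSn.
rewrite binS !PoszM PoszD !PoszX mulrDl mulrDl; congr (_ + _).
rewrite !exprS; ring.
Qed.

Lemma mulrnz (x : int) n : x *+ n = x * n%:Z.
Proof. by rewrite -mulr_natr natz. Qed.

Lemma fz_base q t : (1 < q)%N -> fz q 0 t = q%:Z ^+ t - (q - 2)%:Z ^+ t.
Proof.
move=> q1.
have -> : q%:Z = 1 + (q - 1)%:Z by rewrite -subzn ?(ltnW q1) //; ring.
have -> : (q - 2)%:Z = -1 + (q - 1)%:Z.
  by rewrite -!subzn ?(ltnW q1) //; ring.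
rewrite !exprDn -sumrB big_ord_recr /= subnn expr0 !binn /= subrr addr0.
rewrite /fz; apply: eq_bigr => i _.
rewrite add0n expr1n mul1r PoszM PoszX !mulrnz.
set u := (-1) ^+ _; set v := _ ^+ i; set w := Posz _.
ring.
Qed.

Lemma M_closed q b t n : (0 < b)%N -> (1 < q)%N ->
  (M q b t n)%:Z = (q ^ (t * (b - 1)))%:Z * fz q n t.
Proof.
move=> b0 q1; elim: t n => [|t IHt] n; first by rewrite fz0 mulr0.
elim: n => [|n IHn].
  have -> : M q b t.+1 0%N = (2 * q ^ b.-1 * q ^ (t * b) + (q - 2) * q ^ b.-1 * M q b t 0%N)%N.
    by rewrite /M -/M; congr (2 * _ * _ + _)%N; case: (t).
  rewrite !PoszD !PoszM IHt !fz_base // !PoszX.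
  have -> : (t * b = t * (b - 1) + t)%N by case: (b) b0 => // b2 _; rewrite subn1 /= mulnS addnC.
  rewrite -subn1 mulSn exprD !exprD exprS.
  set Q1 := _ ^+ (b - 1); set Qt := _ ^+ (t * (b - 1)); set Q := Posz q; set P := Posz (q - 2).
  have -> : P = Q - 2 by rewrite /P /Q -subzn.
  rewrite exprS (_ : Posz 2 = 1 + 1) //. ring.
rewrite M_rec PoszD PoszM PoszM IHn IHt fz_pascal PoszX.
rewrite !PoszX mulSn exprD subn1.
set Q1 := _ ^+ b.-1; set Qt := _ ^+ (t * _).
ring.
Qed.

Theorem theorem3p3 (n t q b : nat) :
  (1 <= n)%N -> (1 <= t)%N -> (2 <= q)%N -> (1 <= b)%N ->
  (Nplus q b n t)%:Z =
    (q ^ (t * (b - 1)))%:Z *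
    \sum_(i < t) ('C(n + t, i) * (q - 1) ^ i)%:Z * (1 - (-1) ^+ (t - i)).
Proof.
move=> n1 t1 q2 b1.
by rewrite Nplus_M // M_closed.
Qed.
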